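(* For every $x\in(0,1)$, $\ \Gamma(x,1-x)\ \ge\ e^{-\Gamma'(1)}$.
   Context: For $x>0,y>0$ the Bigamma function is the (convergent) improper integral $\Gamma(x,y):=\int_0^1(-\ln t)^{x-1}\big(-\ln(1-t)\big)^{y-1}\,dt$. $\Gamma'(1)$ is the derivative at $1$ of Euler's gamma function. *)

(* Defs.v *)
From Stdlib Require Import Reals.
From Coquelicot Require Import Coquelicot.
Open Scope R_scope.

Definition EulerGamma (x : R) : R :=
  RInt_gen (fun t => Rpower t (x - 1) * exp (- t))
           (at_right 0) (Rbar_locally p_infty).

Definition Bigamma (x y : R) : R :=
  RInt_gen (fun t => Rpower (- ln t) (x - 1) * Rpower (- ln (1 - t)) (y - 1))
           (at_right 0) (at_left 1).

(* Main.v *)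
Require Import Defs.
From Stdlib Require Import Reals Lra Psatz.
From Coquelicot Require Import Coquelicot.
Open Scope R_scope.

Lemma ballR (x y e : R) : ball x e y <-> Rabs (y - x) < e.
Proof. unfold ball; simpl; unfold AbsRing_ball, abs, minus, plus, opp; simpl. tauto. Qed.

Lemma ball_lt (x y e : R) : ball x e y -> y - x < e /\ x - y < e.
Proof. unfold ball; simpl; unfold AbsRing_ball, abs, minus, plus, opp; simpl.
  intros H. apply Rabs_def2 in H. lra. Qed.

Lemma ball_intro (x y e : R) : Rabs (y - x) < e -> ball x e y.
Proof. unfold ball; simpl; unfold AbsRing_ball, abs, minus, plus, opp; simpl. auto. Qed.

Lemma exp_le_mono a b : a <= b -> exp a <= exp b.
Proof. intros H; destruct (Rle_lt_or_eq_dec _ _ H) as [h|h].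
 left; now apply exp_increasing. subst; lra. Qed.

Lemma gen_lim_to (f : R -> R) Fa Fb l {FFa : Filter Fa} {FFb : Filter Fb} :
  is_RInt_gen f Fa Fb l ->
  filter_prod Fa Fb (fun ab => ex_RInt f (fst ab) (snd ab)) /\
  filterlim (fun ab => RInt f (fst ab) (snd ab)) (filter_prod Fa Fb) (locally l).
Proof.
  intros H. split.
  - assert (H1 := H (fun _ => True) (filter_true)).
    simpl in H1. unfold filtermapi in H1.
    eapply filter_imp; [|exact H1]. intros ab [y [Hy _]]. exists y; exact Hy.
  - intros P HP. assert (H1 := H P HP). unfold filtermapi in H1.
    unfold filtermap. revert H1. apply filter_imp. intros ab [y [Hy Py]].
    rewrite (is_RInt_unique _ _ _ _ Hy). exact Py.
Qed.

Lemma gen_lim_of (f : R -> R) Fa Fb l {FFa : Filter Fa} {FFb : Filter Fb} :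
  filter_prod Fa Fb (fun ab => ex_RInt f (fst ab) (snd ab)) ->
  filterlim (fun ab => RInt f (fst ab) (snd ab)) (filter_prod Fa Fb) (locally l) ->
  is_RInt_gen f Fa Fb l.
Proof.
  intros H1 H2 P HP. unfold filtermapi.
  assert (H3 := H2 P HP). unfold filtermap in H3.
  generalize (filter_and _ _ H1 H3). apply filter_imp.
  intros ab [He Hp]. exists (RInt f (fst ab) (snd ab)). split; [apply (RInt_correct f); exact He| exact Hp].
Qed.

Lemma rint_abs_le (f g : R -> R) u v :
  (forall y, Rmin u v <= y <= Rmax u v -> 0 <= f y <= g y) ->
  ex_RInt f u v -> ex_RInt g u v -> Rabs (RInt f u v) <= Rabs (RInt g u v).
Proof.
  intros H Hf Hg.
  assert (K: forall a b, a <= b -> (forall y, a <= y <= b -> 0 <= f y <= g y) ->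
     ex_RInt f a b -> ex_RInt g a b -> Rabs (RInt f a b) <= Rabs (RInt g a b)).
  { intros a b Hab Hy Ef Eg.
    assert (0 <= RInt f a b) by (apply RInt_ge_0; auto; intros y Hy'; destruct (Hy y); lra).
    assert (RInt f a b <= RInt g a b) by (apply RInt_le; auto; intros y Hy'; destruct (Hy y); lra).
    rewrite !Rabs_right; lra. }
  destruct (Rle_dec u v).
  - apply K; auto. intros; apply H. rewrite Rmin_left, Rmax_right; lra.
  - rewrite <- (opp_RInt_swap f v u (ex_RInt_swap _ _ _ Hf)), <- (opp_RInt_swap g v u (ex_RInt_swap _ _ _ Hg)).
    unfold opp; simpl. rewrite !Rabs_Ropp. apply K.
    lra. intros; apply H. rewrite Rmin_right, Rmax_left; lra.
    now apply ex_RInt_swap. now apply ex_RInt_swap.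
Qed.

Lemma chasR (f : R -> R) a b c : ex_RInt f a b -> ex_RInt f b c ->
  RInt f a b + RInt f b c = RInt f a c.
Proof. intros; exact (RInt_Chasles f a b c H H0). Qed.

Definition convex (I : R -> Prop) :=
  forall a b y, I a -> I b -> Rmin a b <= y <= Rmax a b -> I y.

Lemma ex_RInt_I (f : R -> R) I a b : convex I ->
  (forall y, I y -> continuous f y) -> I a -> I b -> ex_RInt f a b.
Proof. intros C Hc Ha Hb. apply (ex_RInt_continuous (V:=R_CompleteNormedModule)). intros z Hz. apply Hc. exact (C a b z Ha Hb Hz). Qed.

Lemma cmp_exists (f g : R -> R) Fa Fb {PFa : ProperFilter Fa} {PFb : ProperFilter Fb}
  (I : R -> Prop) : convex I -> Fa I -> Fb I ->
  (forall y, I y -> 0 <= f y <= g y /\ continuous f y /\ continuous g y) ->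
  ex_RInt_gen g Fa Fb -> ex_RInt_gen f Fa Fb.
Proof.
  intros C HIa HIb Hfg [lg Hg]. apply gen_lim_to in Hg as [_ Hg].
  assert (Cf : forall y, I y -> continuous f y) by (intros y Hy; apply Hfg; auto).
  assert (Cg : forall y, I y -> continuous g y) by (intros y Hy; apply Hfg; auto).
  assert (II : filter_prod Fa Fb (fun ab => I (fst ab) /\ I (snd ab))).
  { exists I I; auto. }
  assert (Hc : exists y, filterlim (fun ab => RInt f (fst ab) (snd ab)) (filter_prod Fa Fb) (locally y)).
  { apply filterlim_locally_cauchy. intros eps.
    assert (e4 : 0 < eps / 4) by (destruct eps; simpl; lra).
    assert (H1 := proj1 (filterlim_locally _ _) Hg (mkposreal _ e4)).
    destruct (filter_and _ _ H1 II) as [Q Rr HQ HR HQR].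
    exists (fun ab => Q (fst ab) /\ Rr (snd ab)). split.
    { exists Q Rr; auto. }
    intros [a b] [a' b'] [Qa Rb] [Qa' Rb']. simpl in *.
    destruct (HQR a b Qa Rb) as [B1 [Ia Ib]].
    destruct (HQR a' b' Qa' Rb') as [B2 [Ia' Ib']].
    destruct (HQR a b' Qa Rb') as [B3 _].
    destruct (HQR a' b Qa' Rb) as [B4 _].
    simpl in *. apply ball_lt in B1. apply ball_lt in B2. apply ball_lt in B3. apply ball_lt in B4. apply ballR.
    assert (E : forall u v, I u -> I v -> ex_RInt f u v /\ ex_RInt g u v).
    { intros u v Hu Hv; split; eapply ex_RInt_I; eauto. }
    destruct (E a a' Ia Ia') as [Fa1 Ga1].
    destruct (E a' b' Ia' Ib') as [Fa2 Ga2].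
    destruct (E b' b Ib' Ib) as [Fa3 Ga3].
    destruct (E a' b Ia' Ib) as [Fa4 Ga4].
    destruct (E a b Ia Ib) as [Fa5 Ga5].
    assert (X1 : RInt f a a' + RInt f a' b = RInt f a b) by (apply chasR; auto).
    assert (X2 : RInt f a' b' + RInt f b' b = RInt f a' b) by (apply chasR; auto).
    assert (X3 : RInt g a a' + RInt g a' b = RInt g a b) by (apply chasR; auto).
    assert (X4 : RInt g a' b' + RInt g b' b = RInt g a' b) by (apply chasR; auto).
    assert (L1 : Rabs (RInt f a a') <= Rabs (RInt g a a')).
    { apply rint_abs_le; auto. intros y Hy. apply Hfg. exact (C a a' y Ia Ia' Hy). }
    assert (L2 : Rabs (RInt f b' b) <= Rabs (RInt g b' b)).
    { apply rint_abs_le; auto. intros y Hy. apply Hfg. exact (C b' b y Ib' Ib Hy). }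
    assert (M1 : Rabs (RInt g a a') < eps / 2).
    { apply Rabs_def1; simpl in *; lra. }
    assert (M2 : Rabs (RInt g b' b) < eps / 2).
    { apply Rabs_def1; simpl in *; lra. }
    replace (RInt f a' b' - RInt f a b) with (- (RInt f a a' + RInt f b' b)) by lra.
    rewrite Rabs_Ropp. eapply Rle_lt_trans. apply Rabs_triang. lra. }
  destruct Hc as [y Hy]. exists y. apply (gen_lim_of f Fa Fb y); [| exact Hy].
  generalize II; apply filter_imp. intros [a b] [Ia Ib]; simpl. apply (ex_RInt_I f I); auto. all: try exact _.
Qed.

Lemma II_prod (I : R -> Prop) Fa Fb : Fa I -> Fb I ->
  filter_prod Fa Fb (fun ab => I (fst ab) /\ I (snd ab)).
Proof. intros; exists I I; auto. Qed.

Lemma subst_gen (f phi dphi : R -> R) Fa Fb Ga Gb l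
  {FFa: Filter Fa} {FFb : Filter Fb} {FGa: Filter Ga} {FGb: Filter Gb} (I : R -> Prop):
  convex I -> Fa I -> Fb I ->
  (forall y, I y -> is_derive phi y (dphi y) /\ continuous dphi y /\ continuous f (phi y)) ->
  filterlim phi Fa Ga -> filterlim phi Fb Gb ->
  is_RInt_gen f Ga Gb l -> is_RInt_gen (fun y => dphi y * f (phi y)) Fa Fb l.
Proof.
  intros C HIa HIb Hd La Lb H. apply gen_lim_to in H as [_ H].
  assert (K: forall a b, I a -> I b ->
     is_RInt (fun y => dphi y * f (phi y)) a b (RInt f (phi a) (phi b))).
  { intros a b Ia Ib.
    apply (is_RInt_comp (V:=R_CompleteNormedModule) f phi dphi a b);
      intros x Hx; destruct (Hd x (C a b x Ia Ib Hx)) as [D1 [D2 D3]]; auto. }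
  assert (II := II_prod I Fa Fb HIa HIb).
  apply (gen_lim_of _ Fa Fb l).
  - generalize II; apply filter_imp. intros [a b] [Ia Ib]; simpl.
    eexists; apply K; auto.
  - apply filterlim_ext_loc with (f := fun ab => RInt f (phi (fst ab)) (phi (snd ab))).
    + generalize II; apply filter_imp. intros [a b] [Ia Ib]; simpl.
      symmetry; apply is_RInt_unique; apply K; auto.
    + apply (filterlim_comp _ _ _ (fun ab : R * R => (phi (fst ab), phi (snd ab)))
              (fun p : R * R => RInt f (fst p) (snd p)) _ (filter_prod Ga Gb)); [|exact H].
      apply filterlim_pair.
      * eapply filterlim_comp; [apply filterlim_fst| exact La].
      * eapply filterlim_comp; [apply filterlim_snd| exact Lb].
  all: try exact _.
Qed.

Lemma gen_le (f g : R -> R) Fa Fb lf lg {PFa: ProperFilter Fa} {PFb: ProperFilter Fb} :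
  filter_prod Fa Fb (fun ab => fst ab <= snd ab) ->
  filter_prod Fa Fb (fun ab => forall x, fst ab <= x <= snd ab -> f x <= g x) ->
  is_RInt_gen f Fa Fb lf -> is_RInt_gen g Fa Fb lg -> lf <= lg.
Proof.
  intros H1 H2 Hf Hg.
  assert (Hm := is_RInt_gen_minus _ _ _ _ Hg Hf).
  assert (N2 : norm (minus lg lf) <= minus lg lf).
  { apply (RInt_gen_norm (V:=R_CompleteNormedModule) (fun y => minus (g y) (f y))
      (fun y => minus (g y) (f y)) (minus lg lf) (minus lg lf) H1); [| exact Hm | exact Hm].
    generalize H2; apply filter_imp. intros ab Hab x Hx. specialize (Hab x Hx).
    unfold norm, minus, plus, opp; simpl; unfold abs; simpl. rewrite Rabs_right; lra. }
  unfold norm, minus, plus, opp in N2; simpl in N2; unfold abs in N2; simpl in N2.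
  assert (0 <= Rabs (lg + - lf)) by apply Rabs_pos. lra.
Qed.

Lemma ftc_gen (F M : R -> R) Fa Fb la lb {FFa: Filter Fa} {FFb : Filter Fb} (I : R -> Prop):
  convex I -> Fa I -> Fb I ->
  (forall y, I y -> locally y (fun z => is_derive F z (M z)) /\ continuous M y) ->
  filterlim F Fa (locally la) -> filterlim F Fb (locally lb) ->
  is_RInt_gen M Fa Fb (lb - la).
Proof.
  intros C HIa HIb Hd La Lb.
  assert (II := II_prod I Fa Fb HIa HIb).
  apply is_RInt_gen_ext with (f := Derive F).
  - generalize II; apply filter_imp. intros [a b] [Ia Ib] x Hx; simpl in *.
    assert (Ix : I x) by (apply (C a b x Ia Ib); lra).
    apply is_derive_unique. apply (locally_singleton _ _ (proj1 (Hd x Ix))).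
  - apply is_RInt_gen_Derive; auto.
    + generalize II; apply filter_imp. intros [a b] [Ia Ib] x Hx; simpl in *.
      assert (Ix : I x) by (apply (C a b x Ia Ib); lra).
      exists (M x). apply (locally_singleton _ _ (proj1 (Hd x Ix))).
    + generalize II; apply filter_imp. intros [a b] [Ia Ib] x Hx; simpl in *.
      assert (Ix : I x) by (apply (C a b x Ia Ib); lra).
      destruct (Hd x Ix) as [H1 H2].
      apply continuous_ext_loc with (g := M); auto.
      generalize H1; apply filter_imp. intros z Hz. symmetry; now apply is_derive_unique.
Qed.

Definition fh (h t : R) := Rpower t h * exp (- t).
Definition gh (h t : R) := exp (- t) + h * ((t * t - t) * exp (- t)).
Definition Fh (h t : R) := - (1 + h * (t * t + t + 1)) * exp (- t).

Lemma contR (f : R -> R) x : ex_derive f x -> continuous f x.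
Proof. intros H. exact (ex_derive_continuous (K:=R_AbsRing) (V:=R_NormedModule) f x H). Qed.

Lemma Fh_deriv h z : is_derive (Fh h) z (gh h z).
Proof. unfold Fh, gh. auto_derive; auto. ring. Qed.

Lemma gh_cont h z : continuous (gh h) z.
Proof. apply contR. unfold gh. auto_derive; auto. Qed.

Lemma fh_cont h z : 0 < z -> continuous (fh h) z.
Proof. intros Hz. apply contR. unfold fh, Rpower. auto_derive; auto. Qed.

Lemma convex_pos : convex (fun y => 0 < y).
Proof. intros a b y Ha Hb Hy. destruct Hy as [H1 _]. unfold Rmin in H1; destruct Rle_dec; lra. Qed.

Lemma at_right_in (c : R) : 0 < c -> at_right 0 (fun a => 0 < a < c).
Proof. intros Hc. exists (mkposreal c Hc). intros y Hy Hy0. apply ball_lt in Hy. simpl in *. lra. Qed.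

Lemma poly_exp t : 1 <= t -> (t * t + t + 1) * exp (- t) * t <= 81.
Proof.
  intros Ht. set (E := exp (t / 3)).
  assert (HE : exp t = E * E * E).
  { unfold E. rewrite <- !exp_plus. f_equal. field. }
  assert (E1 : t / 3 <= E) by (unfold E; generalize (exp_ineq1_le (t/3)); lra).
  assert (E2 : (t/3) * (t/3) <= E * E) by (apply Rmult_le_compat; lra).
  assert (E3 : (t/3) * (t/3) * (t/3) <= E * E * E) by (apply Rmult_le_compat; nra).
  rewrite exp_Ropp, HE.
  assert (0 < E * E * E) by nra.
  apply (Rmult_le_reg_r (E * E * E)); auto.
  replace ((t * t + t + 1) * / (E * E * E) * t * (E * E * E)) with ((t * t + t + 1) * t) by (field; lra).
  nra.
Qed.

Lemma Fh_lim0 h : filterlim (Fh h) (at_right 0) (locally (-(1+h))).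
Proof.
  replace (-(1+h)) with (Fh h 0) by (unfold Fh; rewrite Ropp_0, exp_0; ring).
  apply (filterlim_filter_le_1 (F := locally 0)).
  apply filter_le_within. apply contR. unfold Fh. auto_derive; auto.
Qed.

Lemma Fh_liminf h : 0 <= h -> filterlim (Fh h) (Rbar_locally p_infty) (locally 0).
Proof.
  intros Hh. apply filterlim_locally. intros eps. simpl.
  exists (Rmax 1 (81 * (1 + h) / eps)). intros t Ht.
  assert (T1 : 1 < t) by (eapply Rle_lt_trans; [apply Rmax_l| exact Ht]).
  assert (T2 : 81 * (1 + h) / eps < t) by (eapply Rle_lt_trans; [apply Rmax_r| exact Ht]).
  apply ball_intro. rewrite Rminus_0_r. unfold Fh.
  assert (P := poly_exp t (Rlt_le _ _ T1)).
  assert (Ep : 0 < exp (- t)) by apply exp_pos.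
  set (Q := t * t + t + 1) in *.
  assert (Q1 : 1 <= Q) by (unfold Q; nra).
  rewrite Rabs_left1.
  2: { assert (0 < 1 + h * Q) by nra. nra. }
  assert (Hp : 0 < eps) by (destruct eps; auto).
  assert (A1 : - (- (1 + h * Q) * exp (- t)) <= (1 + h) * (Q * exp (- t))) by nra.
  assert (A2 : (1 + h) * (Q * exp (- t)) * t <= (1+h) * 81) by nra.
  assert (A3 : 81 * (1 + h) < eps * t).
  { apply (Rmult_lt_compat_l eps) in T2; auto. field_simplify in T2; lra. }
  assert (A4 : (1 + h) * (Q * exp (- t)) < eps).
  { apply (Rmult_lt_reg_r t); lra. }
  lra.
Qed.

Lemma rpow_bound h t : 0 < t -> 0 <= h <= 1 -> Rpower t h <= 1 + h * (t * t - t).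
Proof.
  intros Ht Hh. unfold Rpower. set (y := h * ln t).
  assert (K1 : exp y - 1 <= y * exp y).
  { generalize (exp_ineq1_le (- y)); intros H. rewrite exp_Ropp in H.
    assert (0 < exp y) by apply exp_pos.
    apply (Rmult_le_compat_r (exp y)) in H; [|lra].
    rewrite Rmult_plus_distr_r, Rinv_l in H by lra. lra. }
  assert (K2 : ln t * exp y <= ln t * t).
  { destruct (Rle_dec 1 t) as [H1|H1].
    - assert (0 <= ln t) by (rewrite <- ln_1; apply ln_le; lra).
      apply Rmult_le_compat_l; auto. rewrite <- (exp_ln t) at 1 by auto.
      apply exp_le_mono. unfold y. nra.
    - assert (ln t < 0) by (rewrite <- ln_1; apply ln_increasing; lra).
      apply Rmult_le_compat_neg_l; [lra|]. rewrite <- (exp_ln t) at 1 by auto.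
      apply exp_le_mono. unfold y. nra. }
  assert (K3 : ln t <= t - 1).
  { generalize (exp_ineq1_le (ln t)); rewrite exp_ln by auto; lra. }
  assert (y * exp y = h * (ln t * exp y)) by (unfold y; ring).
  assert (h * (ln t * exp y) <= h * (ln t * t)) by (apply Rmult_le_compat_l; lra).
  assert (h * (ln t * t) <= h * ((t - 1) * t)) by (apply Rmult_le_compat_l; [lra| nra]).
  nra.
Qed.

Lemma fh_le h t : 0 < t -> 0 <= h <= 1 -> 0 <= fh h t <= gh h t.
Proof.
  intros Ht Hh. unfold fh, gh. assert (E := exp_pos (- t)).
  assert (R1 := rpow_bound h t Ht Hh).
  assert (0 < Rpower t h) by (unfold Rpower; apply exp_pos).
  split; nra.
Qed.

Lemma pinf_pos : Rbar_locally p_infty (fun y => 0 < y).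
Proof. exists 0. auto. Qed.

Lemma at_right_pos : at_right 0 (fun y => 0 < y).
Proof. generalize (at_right_in 1 Rlt_0_1). apply filter_imp. intros; lra. Qed.

Lemma gh_int h : 0 <= h -> is_RInt_gen (gh h) (at_right 0) (Rbar_locally p_infty) (1 + h).
Proof.
  intros Hh. replace (1 + h) with (0 - (-(1+h))) by ring.
  apply (ftc_gen (Fh h) (gh h) _ _ _ _ (fun y => 0 < y)).
  - apply convex_pos.
  - apply at_right_pos.
  - apply pinf_pos.
  - intros y Hy. split. apply filter_forall. intros; apply Fh_deriv. apply gh_cont.
  - apply Fh_lim0.
  - apply Fh_liminf; auto.
Qed.

Lemma fh_ex h : 0 <= h <= 1 -> ex_RInt_gen (fh h) (at_right 0) (Rbar_locally p_infty).
Proof.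
  intros Hh. apply (cmp_exists (fh h) (gh h) _ _ (fun y => 0 < y)).
  - apply convex_pos.
  - apply at_right_pos.
  - apply pinf_pos.
  - intros y Hy. split; [apply fh_le; auto|]. split; [apply fh_cont; auto| apply gh_cont].
  - exists (1 + h). apply gh_int; lra.
Qed.

Lemma EG_eq h : EulerGamma (1 + h) = RInt_gen (fh h) (at_right 0) (Rbar_locally p_infty).
Proof. unfold EulerGamma, fh. replace (1 + h - 1) with h by ring. reflexivity. Qed.

Lemma EG_is h : 0 <= h <= 1 ->
  is_RInt_gen (fh h) (at_right 0) (Rbar_locally p_infty) (EulerGamma (1 + h)).
Proof. intros Hh. rewrite EG_eq. apply (RInt_gen_correct (V:=R_CompleteNormedModule)). apply fh_ex; auto. Qed.

Lemma EG_le h : 0 <= h <= 1 -> EulerGamma (1 + h) <= 1 + h.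
Proof.
  intros Hh. apply (gen_le (fh h) (gh h) (at_right 0) (Rbar_locally p_infty) _ _);
    [ | | apply EG_is; auto | apply gh_int; lra].
  - apply Filter_prod with (fun a => 0 < a < 1) (fun b => 1 < b). apply at_right_in; lra.
    exists 1; auto. simpl; intros; lra.
  - apply Filter_prod with (fun a => 0 < a < 1) (fun b => 1 < b). apply at_right_in; lra.
    exists 1; auto. simpl; intros a b Ha Hb t Ht. apply fh_le; lra.
Qed.

Lemma EG_1 : EulerGamma 1 = 1.
Proof.
  replace 1 with (1 + 0) at 1 by ring. rewrite EG_eq.
  apply (is_RInt_gen_unique (V:=R_CompleteNormedModule)).
  apply is_RInt_gen_ext with (f := gh 0).
  - apply Filter_prod with (fun a => 0 < a < 1) (fun b => 1 < b). apply at_right_in; lra.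
    exists 1; auto. simpl; intros a b Ha Hb t Ht.
    unfold gh, fh. unfold Rpower. replace (0 * ln t) with 0 by ring. rewrite exp_0. ring.
  - assert (H := gh_int 0 (Rle_refl 0)). rewrite Rplus_0_r in H. exact H.
Qed.

Lemma at_right0_intro (P : R -> Prop) :
  (exists d, 0 < d /\ forall t, 0 < t < d -> P t) -> at_right 0 P.
Proof.
  intros [d [Hd H]]. exists (mkposreal d Hd). intros y Hy Hy0.
  apply ball_lt in Hy. simpl in *. apply H. lra.
Qed.

Lemma at_right0_elim (P : R -> Prop) :
  at_right 0 P -> exists d, 0 < d /\ forall t, 0 < t < d -> P t.
Proof.
  intros [d Hd]. exists d. split. apply cond_pos. intros t Ht. apply Hd; [|lra].
  apply ball_intro. rewrite Rminus_0_r, Rabs_right; lra.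
Qed.

Lemma at_left1_intro (P : R -> Prop) :
  (exists d, 0 < d /\ forall t, 1 - d < t < 1 -> P t) -> at_left 1 P.
Proof.
  intros [d [Hd H]]. exists (mkposreal d Hd). intros y Hy Hy0.
  apply ball_lt in Hy. simpl in *. apply H. lra.
Qed.

Lemma at_left_in c : c < 1 -> at_left 1 (fun b => c < b < 1).
Proof. intros Hc. apply at_left1_intro. exists (1 - c). split; [lra|]. intros; lra. Qed.

Lemma L1 : filterlim (fun t => - ln t) (at_right 0) (Rbar_locally p_infty).
Proof.
  intros P [M HM]. unfold filtermap. apply at_right0_intro.
  exists (exp (- Rabs M - 1)). split. apply exp_pos. intros t Ht. apply HM.
  assert (ln t < - Rabs M - 1).
  { rewrite <- (ln_exp (- Rabs M - 1)). apply ln_increasing; lra. }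
  generalize (Rle_abs M). lra.
Qed.

Lemma L2 : filterlim (fun t => - ln t) (at_left 1) (at_right 0).
Proof.
  intros P HP. unfold filtermap. apply at_right0_elim in HP as [e [He HP]].
  apply at_left1_intro. exists (1 - exp (- e)).
  assert (exp (- e) < 1) by (rewrite <- exp_0; apply exp_increasing; lra).
  assert (0 < exp (- e)) by apply exp_pos.
  split; [lra|]. intros t Ht. apply HP. split.
  - assert (ln t < 0) by (rewrite <- ln_1; apply ln_increasing; lra). lra.
  - assert (- e < ln t). { rewrite <- (ln_exp (- e)). apply ln_increasing; lra. } lra.
Qed.

Lemma OM1 : filterlim (fun t => 1 - t) (at_left 1) (at_right 0).
Proof.
  intros P HP. unfold filtermap. apply at_right0_elim in HP as [e [He HP]].
  apply at_left1_intro. exists e. split; auto. intros t Ht. apply HP. lra.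
Qed.

Lemma OM2 : filterlim (fun t => 1 - t) (at_right 0) (at_left 1).
Proof.
  intros P HP. unfold filtermap. destruct HP as [e HP].
  apply at_right0_intro. exists e. split. apply cond_pos. intros t Ht. apply HP; [|lra].
  apply ball_intro. rewrite Rabs_left; lra.
Qed.

Lemma L3 : filterlim (fun t => - ln (1 - t)) (at_right 0) (at_right 0).
Proof. apply (filterlim_comp _ _ _ (fun t => 1 - t) (fun s => - ln s) _ (at_left 1)). apply OM2. apply L2. Qed.

Lemma L4 : filterlim (fun t => - ln (1 - t)) (at_left 1) (Rbar_locally p_infty).
Proof. apply (filterlim_comp _ _ _ (fun t => 1 - t) (fun s => - ln s) _ (at_right 0)). apply OM1. apply L1. Qed.

Lemma PwLim p : 0 < p -> filterlim (fun s => Rpower s p) (at_right 0) (locally 0).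
Proof.
  intros Hp. apply filterlim_locally. intros eps. apply at_right0_intro.
  assert (He : 0 < eps) by apply cond_pos.
  exists (exp (ln eps / p)). split. apply exp_pos. intros t Ht.
  apply ball_intro. rewrite Rminus_0_r. unfold Rpower. rewrite Rabs_right by (left; apply exp_pos).
  rewrite <- (exp_ln eps) by auto. apply exp_increasing.
  assert (ln t < ln eps / p). { rewrite <- (ln_exp (ln eps / p)). apply ln_increasing; lra. }
  apply (Rmult_lt_compat_l p) in H; auto. field_simplify in H; lra.
Qed.

Lemma lim_lin (f g : R -> R) F {FF : Filter F} a b c1 c2 :
  filterlim f F (locally a) -> filterlim g F (locally b) ->
  filterlim (fun t => c1 * f t - c2 * g t) F (locally (c1 * a - c2 * b)).
Proof.
  intros Hf Hg. apply filterlim_locally. intros eps.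
  assert (He : 0 < eps) by apply cond_pos.
  set (d := eps / (2 * (Rabs c1 + Rabs c2 + 1))).
  assert (Hd : 0 < d).
  { unfold d. apply Rdiv_lt_0_compat; auto. generalize (Rabs_pos c1) (Rabs_pos c2); lra. }
  generalize (filter_and _ _ (proj1 (filterlim_locally _ _) Hf (mkposreal d Hd))
                             (proj1 (filterlim_locally _ _) Hg (mkposreal d Hd))).
  apply filter_imp. intros t [H1 H2]. apply ball_lt in H1. apply ball_lt in H2. simpl in *.
  apply ball_intro.
  replace (c1 * f t - c2 * g t - (c1 * a - c2 * b)) with (c1 * (f t - a) - c2 * (g t - b)) by ring.
  eapply Rle_lt_trans. apply Rabs_triang. rewrite Rabs_Ropp, !Rabs_mult.
  assert (Rabs (f t - a) < d) by (apply Rabs_def1; lra).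
  assert (Rabs (g t - b) < d) by (apply Rabs_def1; lra).
  assert (Rabs c1 * Rabs (f t - a) <= Rabs c1 * d) by (apply Rmult_le_compat_l; [apply Rabs_pos|lra]).
  assert (Rabs c2 * Rabs (g t - b) <= Rabs c2 * d) by (apply Rmult_le_compat_l; [apply Rabs_pos|lra]).
  assert (Rabs c1 * d + Rabs c2 * d < eps).
  { unfold d. generalize (Rabs_pos c1) (Rabs_pos c2); intros. 
    apply (Rmult_lt_reg_r (2 * (Rabs c1 + Rabs c2 + 1))); [lra|].
    field_simplify; [|lra]. nra. }
  lra.
Qed.

Lemma cont_at_right (f : R -> R) : continuous f 0 -> filterlim f (at_right 0) (locally (f 0)).
Proof. intros H. apply (filterlim_filter_le_1 (F := locally 0)). apply filter_le_within. exact H. Qed.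

Lemma cont_at_left (f : R -> R) : continuous f 1 -> filterlim f (at_left 1) (locally (f 1)).
Proof. intros H. apply (filterlim_filter_le_1 (F := locally 1)). apply filter_le_within. exact H. Qed.

Lemma convex01 : convex (fun y => 0 < y < 1).
Proof. intros a b y Ha Hb [H1 H2]. unfold Rmin, Rmax in *. destruct Rle_dec; lra. Qed.

Lemma I01_r : at_right 0 (fun y => 0 < y < 1).
Proof. apply at_right_in; lra. Qed.
Lemma I01_l : at_left 1 (fun y => 0 < y < 1).
Proof. generalize (at_left_in 0 Rlt_0_1). apply filter_imp; intros; lra. Qed.

Lemma I01_open (P : R -> Prop) : (forall x, 0 < x < 1 -> P x) ->
  filter_prod (at_right 0) (at_left 1)
    (fun ab => forall x, Rmin (fst ab) (snd ab) < x < Rmax (fst ab) (snd ab) -> P x).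
Proof.
  intros H. apply Filter_prod with (fun a => 0 < a < /2) (fun b => /2 < b < 1).
  apply at_right_in; lra. apply at_left_in; lra.
  intros a b Ha Hb x Hx; simpl in *. rewrite Rmin_left, Rmax_right in Hx by lra. apply H; lra.
Qed.

Lemma I01_closed (P : R -> Prop) : (forall x, 0 < x < 1 -> P x) ->
  filter_prod (at_right 0) (at_left 1)
    (fun ab => forall x, fst ab <= x <= snd ab -> P x).
Proof.
  intros H. apply Filter_prod with (fun a => 0 < a < /2) (fun b => /2 < b < 1).
  apply at_right_in; lra. apply at_left_in; lra.
  intros a b Ha Hb x Hx; simpl in *. apply H; lra.
Qed.

Lemma I01_le : filter_prod (at_right 0) (at_left 1) (fun ab => fst ab <= snd ab).
Proof.
  apply Filter_prod with (fun a => 0 < a < /2) (fun b => /2 < b < 1).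
  apply at_right_in; lra. apply at_left_in; lra. intros; simpl; lra.
Qed.

Lemma neg_ln_pos t : 0 < t < 1 -> 0 < - ln t.
Proof. intros Ht. assert (ln t < 0) by (rewrite <- ln_1; apply ln_increasing; lra). lra. Qed.

Lemma Aint h : 0 <= h <= 1 ->
  is_RInt_gen (fun t => Rpower (- ln t) h) (at_right 0) (at_left 1) (EulerGamma (1 + h)).
Proof.
  intros Hh. assert (H := EG_is h Hh).
  apply is_RInt_gen_swap in H.
  assert (Hd : forall y, 0 < y < 1 -> is_derive (fun t => - ln t) y (- / y) /\
      continuous (fun t => - / t) y /\ continuous (fh h) (- ln y)).
  { intros y Hy. split; [|split].
    - auto_derive. lra. field. lra.
    - apply contR. auto_derive. lra.
    - apply fh_cont. apply neg_ln_pos; auto. }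
  assert (H2 := subst_gen (fh h) (fun t => - ln t) (fun t => - / t) (at_right 0) (at_left 1)
     (Rbar_locally p_infty) (at_right 0) (opp (EulerGamma (1 + h))) (fun y => 0 < y < 1)
     convex01 I01_r I01_l Hd L1 L2 H).
  apply is_RInt_gen_opp in H2. unfold opp at 2 in H2; simpl in H2. rewrite Ropp_involutive in H2.
  eapply is_RInt_gen_ext; [|exact H2].
  apply I01_open. intros x Hx. unfold opp; simpl. unfold fh.
  rewrite Ropp_involutive, exp_ln by lra. field. lra.
Qed.

Lemma Bint h : 0 <= h <= 1 ->
  is_RInt_gen (fun t => Rpower (- ln (1 - t)) h) (at_right 0) (at_left 1) (EulerGamma (1 + h)).
Proof.
  intros Hh. assert (H := EG_is h Hh).
  assert (Hd : forall y, 0 < y < 1 -> is_derive (fun t => - ln (1 - t)) y (/ (1 - y)) /\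
      continuous (fun t => / (1 - t)) y /\ continuous (fh h) (- ln (1 - y))).
  { intros y Hy. split; [|split].
    - auto_derive. lra. field. lra.
    - apply contR. auto_derive. lra.
    - apply fh_cont. apply neg_ln_pos; lra. }
  assert (H2 := subst_gen (fh h) (fun t => - ln (1 - t)) (fun t => / (1 - t)) (at_right 0) (at_left 1)
     (at_right 0) (Rbar_locally p_infty) (EulerGamma (1 + h)) (fun y => 0 < y < 1)
     convex01 I01_r I01_l Hd L3 L4 H).
  eapply is_RInt_gen_ext; [|exact H2].
  apply I01_open. intros x Hx. unfold fh.
  rewrite Ropp_involutive, exp_ln by lra. simpl; field; lra.
Qed.

Definition bgf x t := Rpower (- ln t) (x - 1) * Rpower (- ln (1 - t)) (1 - x - 1).
Definition cA x := Rpower (ln 2) (x - 1).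
Definition cB x := Rpower (ln 2) (- x).
Definition Mx x t := cA x * Rpower t (- x) + cB x * Rpower (1 - t) (x - 1).
Definition Fx x t := cA x / (1 - x) * Rpower t (1 - x) - cB x / x * Rpower (1 - t) x.

Lemma rp_mul t a : 0 < t -> Rpower t (a + 1) = Rpower t a * t.
Proof. intros Ht. rewrite Rpower_plus, Rpower_1; auto. Qed.

Lemma Fx_deriv x t : 0 < x < 1 -> 0 < t < 1 -> is_derive (Fx x) t (Mx x t).
Proof.
  intros Hx Ht. unfold Fx, Mx. unfold Rpower. auto_derive. lra. 
  replace (1 + - t) with (1 - t) by ring.
  replace ((1 - x) * ln t) with (- x * ln t + ln t) by ring.
  replace (x * ln (1 - t)) with ((x - 1) * ln (1 - t) + ln (1 - t)) by ring.
  rewrite !exp_plus, !exp_ln by lra. field. lra.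
Qed.

Lemma Mx_cont x t : 0 < t < 1 -> continuous (Mx x) t.
Proof. intros Ht. apply contR. unfold Mx, Rpower. auto_derive. lra. Qed.

Lemma bgf_cont x t : 0 < t < 1 -> continuous (bgf x) t.
Proof.
  intros Ht. assert (H1 := neg_ln_pos t Ht). assert (H2 : 0 < - ln (1 - t)) by (apply neg_ln_pos; lra).
  apply contR. unfold bgf, Rpower. auto_derive. replace (1 + - t) with (1 - t) by ring. repeat split; auto; lra.
Qed.

Lemma rpow1 p : Rpower 1 p = 1.
Proof. unfold Rpower. rewrite ln_1, Rmult_0_r, exp_0. auto. Qed.

Lemma Fx_lim0 x : 0 < x < 1 -> filterlim (Fx x) (at_right 0) (locally (cA x / (1 - x) * 0 - cB x / x * 1)).
Proof.
  intros Hx. unfold Fx. apply (lim_lin (fun t => Rpower t (1 - x)) (fun t => Rpower (1 - t) x) _).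
  - apply PwLim; lra.
  - assert (K := cont_at_right (fun t => Rpower (1 - t) x)).
    cbv beta in K. rewrite Rminus_0_r, rpow1 in K. apply K. apply contR. unfold Rpower. auto_derive. lra.
Qed.

Lemma Fx_lim1 x : 0 < x < 1 -> filterlim (Fx x) (at_left 1) (locally (cA x / (1 - x) * 1 - cB x / x * 0)).
Proof.
  intros Hx. unfold Fx. apply (lim_lin (fun t => Rpower t (1 - x)) (fun t => Rpower (1 - t) x) _).
  - assert (K := cont_at_left (fun t => Rpower t (1 - x))).
    cbv beta in K. rewrite rpow1 in K. apply K. apply contR. unfold Rpower. auto_derive. lra.
  - apply (filterlim_comp _ _ _ (fun t => 1 - t) (fun s => Rpower s x) _ (at_right 0)).
    apply OM1. apply PwLim; lra.
Qed.

Lemma Mx_int x : 0 < x < 1 -> ex_RInt_gen (Mx x) (at_right 0) (at_left 1).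
Proof.
  intros Hx. eexists. apply (ftc_gen (Fx x) (Mx x) _ _ (cA x / (1 - x) * 0 - cB x / x * 1)
     (cA x / (1 - x) * 1 - cB x / x * 0) (fun y => 0 < y < 1)).
  - apply convex01.
  - apply I01_r.
  - apply I01_l.
  - intros y Hy. split.
    + destruct Hy as [Hy1 Hy2]. exists (mkposreal (Rmin y (1 - y)) ltac:(apply Rmin_pos; lra)).
      intros z Hz. apply ball_lt in Hz. simpl in Hz.
      generalize (Rmin_l y (1 - y)) (Rmin_r y (1 - y)); intros.
      apply Fx_deriv; auto. lra.
    + apply Mx_cont; auto.
  - apply Fx_lim0; auto.
  - apply Fx_lim1; auto.
Qed.

Lemma rp_anti u v p : 0 < u <= v -> p <= 0 -> Rpower v p <= Rpower u p.
Proof.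
  intros Hu Hp. unfold Rpower. apply exp_le_mono.
  apply Rmult_le_compat_neg_l; auto. apply ln_le; lra.
Qed.

Lemma rp_pos u p : 0 < Rpower u p.
Proof. unfold Rpower; apply exp_pos. Qed.

Lemma ln2pos : 0 < ln 2.
Proof. rewrite <- ln_1. apply ln_increasing; lra. Qed.

Lemma fa t : 0 < t <= /2 -> ln 2 <= - ln t.
Proof.
  intros Ht. assert (ln t <= ln (/2)) by (apply ln_le; lra).
  rewrite ln_Rinv in H by lra. lra.
Qed.

Lemma fb t : 0 < t < 1 -> t <= - ln (1 - t).
Proof.
  intros Ht. assert (ln (1 - t) <= ln (exp (- t))).
  { apply ln_le. lra. generalize (exp_ineq1_le (- t)); lra. }
  rewrite ln_exp in H. lra.
Qed.

Lemma bgf_le x t : 0 < x < 1 -> 0 < t < 1 -> 0 <= bgf x t <= Mx x t.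
Proof.
  intros Hx Ht. unfold bgf, Mx, cA, cB. replace (1 - x - 1) with (- x) by ring.
  assert (P1 := rp_pos (- ln t) (x - 1)). assert (P2 := rp_pos (- ln (1 - t)) (- x)).
  assert (P3 := rp_pos (ln 2) (x - 1)). assert (P4 := rp_pos t (- x)).
  assert (P5 := rp_pos (ln 2) (- x)). assert (P6 := rp_pos (1 - t) (x - 1)).
  assert (L2 := ln2pos).
  split. nra.
  destruct (Rle_dec t (/2)).
  - assert (Rpower (- ln t) (x - 1) <= Rpower (ln 2) (x - 1)).
    { apply rp_anti; [split; [lra| apply fa; lra] | lra]. }
    assert (Rpower (- ln (1 - t)) (- x) <= Rpower t (- x)).
    { apply rp_anti; [split; [lra| apply fb; lra] | lra]. }
    assert (Rpower (- ln t) (x - 1) * Rpower (- ln (1 - t)) (- x) <=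
            Rpower (ln 2) (x - 1) * Rpower t (- x)) by (apply Rmult_le_compat; lra).
    nra.
  - assert (Rpower (- ln t) (x - 1) <= Rpower (1 - t) (x - 1)).
    { apply rp_anti; [split; [lra| ] | lra].
      generalize (fb (1 - t)); replace (1 - (1 - t)) with t by ring; intros K; apply K; lra. }
    assert (Rpower (- ln (1 - t)) (- x) <= Rpower (ln 2) (- x)).
    { apply rp_anti; [split; [lra| apply fa; lra] | lra]. }
    assert (Rpower (- ln t) (x - 1) * Rpower (- ln (1 - t)) (- x) <=
            Rpower (ln 2) (- x) * Rpower (1 - t) (x - 1)) by (rewrite Rmult_comm; apply Rmult_le_compat; lra).
    nra.
Qed.

Lemma BG_eq x : Bigamma x (1 - x) = RInt_gen (bgf x) (at_right 0) (at_left 1).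
Proof. reflexivity. Qed.

Lemma BG_is x : 0 < x < 1 -> is_RInt_gen (bgf x) (at_right 0) (at_left 1) (Bigamma x (1 - x)).
Proof.
  intros Hx. rewrite BG_eq. apply (RInt_gen_correct (V:=R_CompleteNormedModule)).
  apply (cmp_exists (bgf x) (Mx x) _ _ (fun y => 0 < y < 1)).
  - apply convex01.
  - apply I01_r.
  - apply I01_l.
  - intros y Hy. split; [apply bgf_le; auto|]. split; [apply bgf_cont; auto| apply Mx_cont; auto].
  - apply Mx_int; auto.
Qed.

Lemma const_int (K : R) : is_RInt_gen (V:=R_NormedModule) (fun _ => K) (at_right 0) (at_left 1) K.
Proof.
  assert (H : is_RInt_gen (V:=R_NormedModule) (fun _ => K) (at_right 0) (at_left 1) (K * 1 - K * 0)).
  2: { replace (K * 1 - K * 0) with K in H by ring. exact H. }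
  apply (ftc_gen (fun t => K * t) (fun _ => K) _ _ _ _ (fun y => 0 < y < 1)).
  - apply convex01.
  - apply I01_r.
  - apply I01_l.
  - intros y Hy. split. apply filter_forall. intros z. auto_derive; auto. ring.
    apply contR. auto_derive. auto.
  - apply (cont_at_right (fun t => K * t)). apply contR. auto_derive; auto.
  - apply (cont_at_left (fun t => K * t)). apply contR. auto_derive; auto.
Qed.

Lemma point x h c t : 0 < x < 1 -> 0 < h -> 0 < t < 1 ->
  exp c * (1 - c + 1 / h) - exp c * (1 - x) / h * Rpower (- ln t) h
    - exp c * x / h * Rpower (- ln (1 - t)) h <= bgf x t.
Proof.
  intros Hx Hh Ht. unfold bgf. replace (1 - x - 1) with (- x) by ring.
  set (a := - ln t). set (b := - ln (1 - t)).
  assert (Ha : 0 < a) by (apply neg_ln_pos; auto).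
  assert (Hb : 0 < b) by (apply neg_ln_pos; lra).
  assert (Ka : h * ln a <= Rpower a h - 1).
  { unfold Rpower. generalize (exp_ineq1_le (h * ln a)); lra. }
  assert (Kb : h * ln b <= Rpower b h - 1).
  { unfold Rpower. generalize (exp_ineq1_le (h * ln b)); lra. }
  set (phi := - (1 - x) * (Rpower a h - 1) / h - x * (Rpower b h - 1) / h).
  assert (F1 : phi <= (x - 1) * ln a + - x * ln b).
  { unfold phi.
    assert (ln a <= (Rpower a h - 1) / h) by (apply (Rmult_le_reg_l h); auto; field_simplify; lra).
    assert (ln b <= (Rpower b h - 1) / h) by (apply (Rmult_le_reg_l h); auto; field_simplify; lra).
    assert (- (1 - x) * (Rpower a h - 1) / h = (x - 1) * ((Rpower a h - 1) / h)) by (field; lra).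
    assert (- x * (Rpower b h - 1) / h = - x * ((Rpower b h - 1) / h)) by (field; lra).
    nra. }
  assert (E1 : Rpower a (x - 1) * Rpower b (- x) = exp ((x - 1) * ln a + - x * ln b)).
  { unfold Rpower. rewrite exp_plus. auto. }
  rewrite E1.
  assert (E2 : exp phi <= exp ((x - 1) * ln a + - x * ln b)) by (apply exp_le_mono; auto).
  assert (E3 : exp c * (1 + (phi - c)) <= exp phi).
  { replace phi with (c + (phi - c)) at 2 by ring. rewrite exp_plus.
    apply Rmult_le_compat_l. left; apply exp_pos. apply exp_ineq1_le. }
  assert (E4 : exp c * (1 - c + 1 / h) - exp c * (1 - x) / h * Rpower a h
    - exp c * x / h * Rpower b h = exp c * (1 + (phi - c))) by (unfold phi; field; lra).
  lra.
Qed.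

Lemma key x h c : 0 < x < 1 -> 0 < h <= 1 ->
  exp c * (1 - c - (EulerGamma (1 + h) - 1) / h) <= Bigamma x (1 - x).
Proof.
  intros Hx Hh. set (G := EulerGamma (1 + h)).
  set (K := exp c * (1 - c + 1 / h)). set (k1 := exp c * (1 - x) / h). set (k2 := exp c * x / h).
  assert (HA := Aint h (conj (Rlt_le _ _ (proj1 Hh)) (proj2 Hh))).
  assert (HB := Bint h (conj (Rlt_le _ _ (proj1 Hh)) (proj2 Hh))).
  fold G in HA, HB.
  apply (is_RInt_gen_scal _ k1) in HA. apply (is_RInt_gen_scal _ k2) in HB.
  assert (HC := is_RInt_gen_minus _ _ _ _ (is_RInt_gen_minus _ _ _ _ (const_int K) HA) HB).
  replace (exp c * (1 - c - (G - 1) / h)) with (minus (minus K (scal k1 G)) (scal k2 G)).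
  2: { unfold minus, plus, opp, scal; simpl. unfold mult; simpl. unfold K, k1, k2. field. lra. }
  apply (gen_le (fun y => minus (minus K (scal k1 (Rpower (- ln y) h))) (scal k2 (Rpower (- ln (1 - y)) h))) (bgf x) (at_right 0) (at_left 1) _ _ I01_le); [| exact HC | apply BG_is; auto].
  apply I01_closed. intros t Ht.
  unfold minus, plus, opp, scal; simpl. unfold mult; simpl.
  generalize (point x h c t Hx (proj1 Hh) Ht). unfold K, k1, k2. lra.
Qed.

Lemma qbounds x h : 0 < x < 1 -> 0 < h <= 1 ->
  exp (- ((EulerGamma (1 + h) - EulerGamma 1) / h)) <= Bigamma x (1 - x) /\
  (EulerGamma (1 + h) - EulerGamma 1) / h <= 1.
Proof.
  intros Hx Hh. rewrite EG_1. split.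
  - set (q := (EulerGamma (1 + h) - 1) / h).
    generalize (key x h (- q) Hx Hh). fold q. replace (1 - - q - q) with 1 by ring. lra.
  - assert (EulerGamma (1 + h) <= 1 + h) by (apply EG_le; lra).
    apply (Rmult_le_reg_r h); [lra|]. field_simplify; lra.
Qed.

Theorem mainTheorem12 (x : R) (hx0 : 0 < x) (hx1 : x < 1) :
  exp (- Derive EulerGamma 1) <= Bigamma x (1 - x).
Proof.
  set (B := Bigamma x (1 - x)).
  set (q := fun n : nat => (EulerGamma (1 + (0 + / (INR n + 1))) - EulerGamma 1) / (0 + / (INR n + 1))).
  assert (HD : Derive EulerGamma 1 = real (Lim_seq q)) by reflexivity.
  assert (Hq : forall n, exp (- q n) <= B /\ q n <= 1).
  { intros n. unfold q. rewrite Rplus_0_l. apply qbounds; [lra|].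
    assert (1 <= INR n + 1) by (generalize (pos_INR n); lra).
    split. apply Rinv_0_lt_compat; lra.
    rewrite <- Rinv_1. apply Rinv_le_contravar; lra. }
  assert (HB : 0 < B) by (destruct (Hq O); generalize (exp_pos (- q O)); lra).
  assert (Hlo : forall n, - ln B <= q n).
  { intros n. destruct (Hq n) as [H _]. apply ln_le in H; [|apply exp_pos].
    rewrite ln_exp in H. lra. }
  assert (R1 : Rbar_le (Lim_seq (fun _ => - ln B)) (Lim_seq q)).
  { apply Lim_seq_le_loc. exists O. intros; apply Hlo. }
  assert (R2 : Rbar_le (Lim_seq q) (Lim_seq (fun _ => 1))).
  { apply Lim_seq_le_loc. exists O. intros; apply Hq. }
  rewrite Lim_seq_const in R1, R2.
  rewrite HD. destruct (Lim_seq q) as [l| |]; simpl in *; try contradiction.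
  rewrite <- (exp_ln B) by auto. apply exp_le_mono. lra.
Qed.
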